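(* Define the linear functions $H_1,H_2,H_3,H_4:\mathbb{R}^3\to\mathbb{R}$ by $H_1(x)=x_1-x_2-x_3$, $H_2(x)=x_1-x_2+x_3$, $H_3(x)=x_1+x_2-x_3$, $H_4(x)=x_1+x_2+x_3$, and the sets $C_1^0=\{x\in\mathbb{R}^3: H_1(x)>0,\,H_2(x)>0,\,H_3(x)>0,\,H_4(x)>0\}\cup\{0\}$, $C_2^0=\{x\in\mathbb{R}^3: H_1(x)<0,\,H_2(x)<0,\,H_3(x)>0,\,H_4(x)>0\}\cup\{0\}$, $C_3^0=\{x\in\mathbb{R}^3: H_1(x)<0,\,H_2(x)>0,\,H_3(x)<0,\,H_4(x)>0\}\cup\{0\}$. Then the cones $C_1^0,C_2^0,C_3^0$ are cotransverse.
   Context: A subset $X\subseteq\mathbb{R}^3$ is a cone if $x\in X$ and $\lambda\ge 0$ imply $\lambda x\in X$. The convex hull of a set $X$ is $\mathrm{conv}\,X=\{\sum_{i=1}^n\lambda_i x_i: x_i\in X,\ n\in\mathbb{N},\ \lambda_i\ge0,\ \sum_i\lambda_i=1\}$; the convex hull of several cones means the convex hull of their union. Two cones $C,D$ are transverse if $C\cup(-C)$ and $D\cup(-D)$ intersect only in $\{0\}$. Three cones $C_1,C_2,C_3$ are cotransverse if the origin is a vertex of the convex hull of $C_1,C_2,C_3$ and, for every $\{i,j,k\}=\{1,2,3\}$, the cone $C_i$ and the convex hull of the cones $C_j,C_k$ are transverse. *)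

(* Defs.v *)
(* points of R^3 are row vectors 'rV[R]_3 over a realType R
   (the real numbers, axiomatized as in MathComp-Analysis). Coordinates
   x_1, x_2, x_3 are x 0 i0, x 0 i1, x 0 i2. *)
From mathcomp Require Import all_boot all_order all_algebra.
From mathcomp Require Import reals.
Set Implicit Arguments. Unset Strict Implicit. Unset Printing Implicit Defensive.
Import Order.TTheory GRing.Theory Num.Theory.
Local Open Scope ring_scope.

Definition i0 : 'I_3 := @Ordinal 3 0 isT.
Definition i1 : 'I_3 := @Ordinal 3 1 isT.
Definition i2 : 'I_3 := @Ordinal 3 2 isT.

Section Defs.
Variable R : realType.
Notation pt := 'rV[R]_3.

Definition is_cone (X : pt -> Prop) : Prop :=
  forall x (l : R), X x -> 0 <= l -> X (l *: x).

Definition conv (X : pt -> Prop) : pt -> Prop := fun v =>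
  exists (n : nat) (lam : 'I_n -> R) (x : 'I_n -> pt),
    (forall i, X (x i)) /\ (forall i, 0 <= lam i) /\
    \sum_(i < n) lam i = 1 /\ v = \sum_(i < n) lam i *: x i.

Definition conv2 (C D : pt -> Prop) : pt -> Prop := conv (fun x => C x \/ D x).
Definition conv3 (C D E : pt -> Prop) : pt -> Prop :=
  conv (fun x => C x \/ D x \/ E x).

Definition is_vertex (K : pt -> Prop) (v : pt) : Prop :=
  K v /\ forall x y (t : R), K x -> K y -> 0 < t < 1 ->
    v = t *: x + (1 - t) *: y -> x = v /\ y = v.

Definition transverse (C D : pt -> Prop) : Prop :=
  forall x, (C x \/ C (- x)) -> (D x \/ D (- x)) -> x = 0.

Definition cotransverse (C1 C2 C3 : pt -> Prop) : Prop :=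
  is_vertex (conv3 C1 C2 C3) 0 /\
  transverse C1 (conv2 C2 C3) /\
  transverse C2 (conv2 C1 C3) /\
  transverse C3 (conv2 C1 C2).

Definition H1 (x : pt) : R := x 0 i0 - x 0 i1 - x 0 i2.
Definition H2 (x : pt) : R := x 0 i0 - x 0 i1 + x 0 i2.
Definition H3 (x : pt) : R := x 0 i0 + x 0 i1 - x 0 i2.
Definition H4 (x : pt) : R := x 0 i0 + x 0 i1 + x 0 i2.

Definition C1_0 : pt -> Prop := fun x =>
  (0 < H1 x /\ 0 < H2 x /\ 0 < H3 x /\ 0 < H4 x) \/ x = 0.
Definition C2_0 : pt -> Prop := fun x =>
  (H1 x < 0 /\ H2 x < 0 /\ 0 < H3 x /\ 0 < H4 x) \/ x = 0.
Definition C3_0 : pt -> Prop := fun x =>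
  (H1 x < 0 /\ 0 < H2 x /\ H3 x < 0 /\ 0 < H4 x) \/ x = 0.
End Defs.

(* Main.v *)
Require Import Defs.
From mathcomp Require Import all_boot all_order all_algebra.
From mathcomp Require Import reals.
From mathcomp Require Import ring lra.
Set Implicit Arguments. Unset Strict Implicit. Unset Printing Implicit Defensive.
Import Order.TTheory GRing.Theory Num.Theory.
Local Open Scope ring_scope.

Section S.
Variable R : realType.
Notation pt := 'rV[R]_3.

Definition lin (a b c : R) (x : pt) : R := a * x 0 i0 + b * x 0 i1 + c * x 0 i2.

Definition posf a b c (X : pt -> Prop) :=
  forall x, X x -> 0 <= lin a b c x /\ (lin a b c x = 0 -> x = 0).

Lemma lin_sum a b c n (l : 'I_n -> R) (x : 'I_n -> pt) :
  lin a b c (\sum_(i < n) l i *: x i) = \sum_(i < n) l i * lin a b c (x i).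
Proof.
rewrite /lin !summxE; under eq_bigr do rewrite !mxE.
under [X in _ + _ * X]eq_bigr do rewrite !mxE.
under [X in _ + _ * X + _]eq_bigr do rewrite !mxE.
rewrite !mulr_sumr -!big_split; apply: eq_bigr => i _ /=; ring.
Qed.

Lemma lin_comb a b c t (x y : pt) :
  lin a b c (t *: x + (1 - t) *: y) = t * lin a b c x + (1 - t) * lin a b c y.
Proof. rewrite /lin !mxE; ring. Qed.

Lemma lin_opp a b c (x : pt) : lin a b c (- x) = - lin a b c x.
Proof. rewrite /lin !mxE; ring. Qed.

Lemma posf_conv a b c X : posf a b c X -> posf a b c (conv X).
Proof.
move=> hX v [n [l [x [Hx [Hl [H1l ->]]]]]].
rewrite lin_sum.
have hge : forall i, 0 <= l i * lin a b c (x i).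
  by move=> i; apply: mulr_ge0; [exact: Hl | case: (hX _ (Hx i))].
split; first by apply: sumr_ge0 => i _; exact: hge.
move=> /eqP; rewrite psumr_eq0; last by move=> i _; exact: hge.
move=> /allP Hall; apply: big1 => i _.
have /eqP := Hall i (mem_index_enum i).
move/eqP; rewrite /= mulf_eq0 => /orP [/eqP -> | /eqP h]; first by rewrite scale0r.
by rewrite (proj2 (hX _ (Hx i)) h) scaler0.
Qed.

Lemma trans_gen (C K : pt -> Prop) a b c a' b' c' :
  posf a b c K -> posf a' b' c' K ->
  (forall y, C y -> y = 0 \/ (lin a b c y < 0 /\ lin a' b' c' (- y) < 0)) ->
  transverse C K.
Proof.
move=> h1 h2 hC x [Cx|Cx] [Kx|Kx].
- case: (hC _ Cx) => // [[l1 _]]; by rewrite ltNge (proj1 (h1 _ Kx)) in l1.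
- case: (hC _ Cx) => // [[_ l2]]; by rewrite ltNge (proj1 (h2 _ Kx)) in l2.
- case: (hC _ Cx) => [/eqP|[_ l2]]; first by rewrite oppr_eq0 => /eqP.
  by rewrite opprK ltNge (proj1 (h2 _ Kx)) in l2.
- case: (hC _ Cx) => [/eqP|[l1 _]]; first by rewrite oppr_eq0 => /eqP.
  by rewrite ltNge (proj1 (h1 _ Kx)) in l1.
Qed.

Lemma lin0 a b c : lin a b c (0 : pt) = 0.
Proof. rewrite /lin !mxE; ring. Qed.


Lemma posf_of a b c (X : pt -> Prop) :
  (forall x, X x -> x = 0 \/ 0 < lin a b c x) -> posf a b c X.
Proof.
move=> h x /h [->|hp]; first by rewrite lin0.
split; [exact: ltW | by move=> e; rewrite e ltxx in hp].
Qed.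

End S.

Ltac solveH := unfold lin, H1, H2, H3, H4 in *; rewrite ?mxE; lra.

Theorem lemma1 (R : realType) :
  cotransverse (@C1_0 R) (@C2_0 R) (@C3_0 R).
Proof.
have P4 : posf 1 1 1 (conv3 (@C1_0 R) (@C2_0 R) (@C3_0 R)).
  apply: posf_conv; apply: posf_of => x.
  rewrite /C1_0 /C2_0 /C3_0; move=> [[[_ [_ [_ h]]]|->]|[[[_ [_ [_ h]]]|->]|[[_ [_ [_ h]]]|->]]]; first [by left | right; solveH].
split.
  split.
    rewrite /conv3 /conv; exists 1%N, (fun _ => 1), (fun _ => 0); split; first by move=> i; left; right.
    split; first by move=> i; lra.
    by rewrite !big_ord1 scaler0.
  move=> x y t Kx Ky ht e.
  have := f_equal (lin 1 1 1) e; rewrite lin_comb lin0.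
  case: (P4 _ Kx) => gx ex; case: (P4 _ Ky) => gy ey.
  move: ht => /andP [t0 t1] E; clear e.
  have a1 : 0 <= t * lin 1 1 1 x by apply: mulr_ge0; lra.
  have a2 : 0 <= (1 - t) * lin 1 1 1 y by apply: mulr_ge0; lra.
  have b1 : t * lin 1 1 1 x = 0 by lra.
  have b2 : (1 - t) * lin 1 1 1 y = 0 by lra.
  have /eqP := b1; rewrite mulf_eq0 => /orP [/eqP ?|/eqP /ex ->]; first by exfalso; lra.
  have /eqP := b2; rewrite mulf_eq0 => /orP [/eqP ?|/eqP /ey ->]; first by exfalso; lra.
  by [].
split.
  apply: (@trans_gen _ _ _ (-1) 1 1 1 1 1).
  - apply: posf_conv; apply: posf_of => x.
    rewrite /C2_0 /C3_0; move=> [[[h [_ [_ _]]]|->]|[[h [_ [_ _]]]|->]]; first [by left | right; solveH].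
  - apply: posf_conv; apply: posf_of => x.
    rewrite /C2_0 /C3_0; move=> [[[_ [_ [_ h]]]|->]|[[_ [_ [_ h]]]|->]]; first [by left | right; solveH].
  - by move=> y [[h1 [h2 [h3 h4]]]|->]; [right; split; solveH | left].
split.
  apply: (@trans_gen _ _ _ 1 (-1) 1 1 1 1).
  - apply: posf_conv; apply: posf_of => x.
    rewrite /C1_0 /C3_0; move=> [[[_ [h [_ _]]]|->]|[[_ [h [_ _]]]|->]]; first [by left | right; solveH].
  - apply: posf_conv; apply: posf_of => x.
    rewrite /C1_0 /C3_0; move=> [[[_ [_ [_ h]]]|->]|[[_ [_ [_ h]]]|->]]; first [by left | right; solveH].
  - by move=> y [[h1 [h2 [h3 h4]]]|->]; [right; split; solveH | left].
apply: (@trans_gen _ _ _ 1 1 (-1) 1 1 1).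
- apply: posf_conv; apply: posf_of => x.
  rewrite /C1_0 /C2_0; move=> [[[_ [_ [h _]]]|->]|[[_ [_ [h _]]]|->]]; first [by left | right; solveH].
- apply: posf_conv; apply: posf_of => x.
  rewrite /C1_0 /C2_0; move=> [[[_ [_ [_ h]]]|->]|[[_ [_ [_ h]]]|->]]; first [by left | right; solveH].
- by move=> y [[h1 [h2 [h3 h4]]]|->]; [right; split; solveH | left].
Qed.
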